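(* Let $G$ be a finite connected graph, viewed as an electrical network with unit resistance on each edge, and let $x,y$ be vertices of $G$. Then for every $\varepsilon>0$, $$\mathbb{P}_x\big(\tau_y\leq \varepsilon\, (R_{\mathrm{eff}}(x\leftrightarrow y))^2\big)\leq \varepsilon,$$ where $(X_t)$ is simple random walk on $G$ started at $x$.
   Context: $\tau_y=\min\{t\geq 1:X_t=y\}$. $R_{\mathrm{eff}}(x\leftrightarrow y)$ is the effective resistance between $x$ and $y$ in the network with unit edge resistances. *)

(* Defs.v *)
From HB Require Import structures.
From mathcomp Require Import all_boot all_order all_algebra.
From Stdlib Require Import ClassicalEpsilon.
Set Implicit Arguments. Unset Strict Implicit. Unset Printing Implicit Defensive.
Import Order.TTheory GRing.Theory Num.Theory.
Local Open Scope ring_scope.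

Definition deg (T : finType) (e : rel T) (v : T) : nat := #|[set w | e v w]|.

Definition srw_step (R : realFieldType) (T : finType) (e : rel T) (v w : T) : R :=
  (e v w)%:R / (deg e v)%:R.

(* hit_within e y n v = P_v( tau_y <= n ), tau_y = min { t >= 1 : X_t = y },
   for simple random walk (X_t) started at v. *)
Fixpoint hit_within (R : realFieldType) (T : finType) (e : rel T) (y : T)
    (n : nat) (v : T) : R :=
  match n with
  | 0 => 0
  | n'.+1 => \sum_(w : T) srw_step R e v w *
                (if w == y then 1 else hit_within R e y n' w)
  end.

(* Unit-current voltage from x to y in the network with unit resistances:
   voltage grounded at y (v y = 0), harmonic (Kirchhoff's node law) at every
   vertex other than x,y, and unit current flowing out of x. *)
Definition unit_voltage (R : realFieldType) (T : finType) (e : rel T) (x y : T)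
    (v : {ffun T -> R}) : Prop :=
  [/\ v y = 0,
      forall z, z != x -> z != y -> \sum_(w | e z w) (v z - v w) = 0
    & \sum_(w | e x w) (v x - v w) = 1].

(* Effective resistance R_eff(x <-> y) = voltage at x for the unit current flow
   (the voltage exists and is unique for connected graphs); 0 when x = y. *)
Definition Reff (R : realFieldType) (T : finType) (e : rel T) (x y : T) : R :=
  if x == y then 0
  else (epsilon (inhabits [ffun _ : T => (0 : R)]) (unit_voltage e x y)) x.

(* Main.v *)
Require Import Defs.
From HB Require Import structures.
From mathcomp Require Import all_boot all_order all_algebra.
From Stdlib Require Import ClassicalEpsilon.
Set Implicit Arguments. Unset Strict Implicit.
Import Order.TTheory GRing.Theory Num.Theory.
Local Open Scope ring_scope.

Lemma swap_sum (R : realFieldType) (T : finType) (e : rel T) (e_sym : symmetric e)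
  (S : {set T}) (F : T -> T -> R) :
  \sum_(z in S) \sum_(w | (w \in S) && e z w) F z w =
  \sum_(z in S) \sum_(w | (w \in S) && e z w) F w z.
Proof.
rewrite (exchange_big_dep (fun w => w \in S)) /=; last by move=> i j _ /andP[].
apply: eq_bigr => w wS; apply: eq_bigl => z.
by rewrite wS e_sym.
Qed.

Lemma antisym_sum (R : realFieldType) (T : finType) (e : rel T) (e_sym : symmetric e)
  (S : {set T}) (f : T -> R) :
  \sum_(z in S) \sum_(w | (w \in S) && e z w) (f z - f w) = 0.
Proof.
have H := swap_sum e_sym S (fun z w => f z - f w).
set X := (X in X = 0).
suff: X *+ 2 = 0 by move/eqP; rewrite mulrn_eq0 /= => /eqP.
rewrite mulr2n {2}/X H -big_split /=.
rewrite big1 // => z _; rewrite -big_split big1 // => w _; by rewrite /= addrA subrK subrr.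
Qed.

Lemma swap_all (R : realFieldType) (T : finType) (e : rel T) (e_sym : symmetric e)
  (F : T -> T -> R) :
  \sum_z \sum_(w | e z w) F z w = \sum_z \sum_(w | e z w) F w z.
Proof.
rewrite (exchange_big_dep xpredT) //=.
by apply: eq_bigr => w _; apply: eq_bigl => z; rewrite e_sym.
Qed.

Lemma harm_zero (R : realFieldType) (T : finType) (e : rel T) (e_sym : symmetric e)
  (e_conn : forall u v : T, connect e u v) (y : T) (v : T -> R) :
  v y = 0 -> (forall z, z != y -> \sum_(w | e z w) (v z - v w) = 0) ->
  forall z, v z = 0.
Proof.
move=> vy hz.
have E0 : \sum_z \sum_(w | e z w) v z * (v z - v w) = 0.
  rewrite big1 // => z _; rewrite -mulr_sumr.
  case: (eqVneq z y) => [->|nzy]; first by rewrite vy mul0r.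
  by rewrite hz // mulr0.
have Esq : \sum_z \sum_(w | e z w) (v z - v w) ^+ 2 = 0.
  have -> : \sum_z \sum_(w | e z w) (v z - v w) ^+ 2 =
     \sum_z \sum_(w | e z w) v z * (v z - v w) +
     \sum_z \sum_(w | e z w) v w * (v w - v z).
    rewrite -big_split /=; apply: eq_bigr => z _; rewrite -big_split /=.
    apply: eq_bigr => w _.
    by rewrite expr2 mulrBl -mulrN opprB.
  by rewrite -(swap_all e_sym (fun z w => v z * (v z - v w))) E0 addr0.
have edge : forall z w, e z w -> v z = v w.
  move=> z w ezw.
  have H := @psumr_eq0P _ _ _ _ (fun i _ => sumr_ge0 _ (fun j _ => sqr_ge0 _)) Esq z isT.
  have := @psumr_eq0P _ _ _ _ (fun j _ => sqr_ge0 _) H w ezw.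
  by move/eqP; rewrite sqrf_eq0 subr_eq0 => /eqP.
move=> z.
have cl : closed e [pred u | v u == 0].
  by move=> a b /edge eab; rewrite !inE eab.
have := closed_connect cl (e_conn z y).
by rewrite !inE vy eqxx => /eqP.
Qed.

Lemma voltage_exists (R : realFieldType) (T : finType) (e : rel T) (e_sym : symmetric e)
  (e_conn : forall u v : T, connect e u v) (x y : T) (nxy : x != y) :
  exists v : {ffun T -> R}, unit_voltage e x y v.
Proof.
pose Phi (v : {ffun T -> R^o}) : {ffun T -> R^o} :=
  [ffun z => if z == y then v y else \sum_(w | e z w) (v z - v w)].
have lin : linear Phi.
  move=> k u w; apply/ffunP => z; rewrite !ffunE.
  case: ifP => _; first by [].
  rewrite scaler_sumr -big_split /=; apply: eq_bigr => t _.
  have -> : (k *: u + w) t = k *: u t + w t by rewrite !ffunE.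
  by rewrite scalerBr opprD addrACA.
pose phiM := GRing.isLinear.Build _ _ _ _ Phi lin.
pose phiL : {linear {ffun T -> R^o} -> {ffun T -> R^o}} := HB.pack Phi phiM.
pose f := linfun phiL.
have inj : lker f == 0%VS.
  apply/lker0P => u w; rewrite !lfunE /= => H.
  apply/ffunP => z; apply/eqP; rewrite -subr_eq0; apply/eqP.
  apply: (harm_zero e_sym e_conn (y := y) (v := fun z => u z - w z)).
  - have := congr1 (fun F : {ffun T -> R^o} => F y) H; rewrite /= !ffunE eqxx => ->.
    exact: subrr.
  - move=> t nty; have := congr1 (fun F : {ffun T -> R^o} => F t) H; rewrite /= !ffunE (negbTE nty).
    move=> Ht; rewrite -[RHS](subrr (\sum_(s | e t s) (w t - w s))).
    rewrite -{1}Ht -sumrB; apply: eq_bigr => s _.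
    by rewrite !opprB addrACA [RHS]addrACA [- w t + _]addrC.
pose d : {ffun T -> R^o} := [ffun z => (z == x)%:R].
exists (f^-1%VF d).
have := lker0_lfunVK inj d.
rewrite lfunE /= => H.
set V := (f^-1)%VF d in H *.
have HV z : (if z == y then V y else \sum_(w | e z w) (V z - V w)) = (z == x)%:R.
  by have := congr1 (fun F : {ffun T -> R^o} => F z) H; rewrite /= !ffunE.
split.
- by have := HV y; rewrite eqxx eq_sym (negbTE nxy).
- by move=> z nzx nzy; have := HV z; rewrite (negbTE nzy) (negbTE nzx).
- by have := HV x; rewrite (negbTE nxy) eqxx.
Qed.

Lemma div_eq (R : realFieldType) (T : finType) (e : rel T) (x y : T)
  (v : {ffun T -> R}) (hv : unit_voltage e x y v) z :
  z != y -> \sum_(w | e z w) (v z - v w) = (z == x)%:R.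
Proof.
case: hv => _ h2 h3 nzy; case: (eqVneq z x) => [->|nzx]; first by [].
exact: h2.
Qed.

Lemma edge_bound (R : realFieldType) (T : finType) (e : rel T) (e_sym : symmetric e)
  (x y : T) (v : {ffun T -> R}) (hv : unit_voltage e x y v) a b :
  e a b -> v a - v b <= 1.
Proof.
move=> eab.
case: (leP (v a) (v b)) => hab.
  by apply: (@le_trans _ _ 0); [rewrite subr_le0 | exact: ler01].
pose S := [set z | v a <= v z].
pose dv z := \sum_(w | e z w) (v z - v w).
have hd := div_eq hv.
have split1 : \sum_(z in S) dv z =
   \sum_(z in S) \sum_(w | (w \in S) && e z w) (v z - v w) +
   \sum_(z in S) \sum_(w | e z w && (w \notin S)) (v z - v w).
  rewrite -big_split /=; apply: eq_bigr => z _.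
  rewrite /dv (bigID (fun w => w \in S)) /=; congr (_ + _).
  by apply: eq_bigl => w; rewrite andbC.
rewrite (antisym_sum e_sym) add0r in split1.
have lower : v a - v b <= \sum_(z in S) dv z.
  have aS : a \in S by rewrite inE.
  have bS : b \notin S by rewrite inE -ltNge.
  rewrite split1 (bigD1 a) //= (bigD1 b) /=; last by rewrite eab bS.
  rewrite -addrA lerDl; apply: addr_ge0.
    apply: sumr_ge0 => w /andP[/andP[_ wS] _].
    by rewrite subr_ge0; apply: ltW; move: wS; rewrite inE -ltNge.
  apply: sumr_ge0 => z /andP[zS _]; apply: sumr_ge0 => w /andP[_ wS].
  rewrite subr_ge0; apply: ltW; apply: (@lt_le_trans _ _ (v a)).
    by move: wS; rewrite inE -ltNge.
  by move: zS; rewrite inE.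
apply: le_trans lower _.
have tot : \sum_z dv z = 0.
  have := antisym_sum e_sym setT v.
  rewrite big_mkcond /=; under eq_bigr => z _ do rewrite in_setT /=.
  move=> H; rewrite -[RHS]H; apply: eq_bigr => z _.
  by apply: eq_bigl => w; rewrite in_setT.
rewrite (bigID (fun z => z \in S)) /= in tot.
case yS : (y \in S).
  have : 0 <= \sum_(z | z \notin S) dv z.
    apply: sumr_ge0 => z zS; rewrite /dv hd ?ler0n //.
    by apply: contraNneq zS => ->.
  move/eqP: tot; rewrite addr_eq0 => /eqP ->.
  by move=> H; apply: le_trans ler01; rewrite oppr_le0.
have -> : \sum_(z in S) dv z = \sum_(z in S) (z == x)%:R.
  by apply: eq_bigr => z zS; rewrite /dv hd //; apply: contraTneq zS => ->; rewrite yS.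
rewrite big_mkcond /=.
apply: le_trans (_ : \sum_z (z == x)%:R <= 1).
  by apply: ler_sum => z _; case: ifP => _ //; rewrite ler0n.
by rewrite (bigD1 x) //= eqxx big1 ?addr0 // => z /negbTE ->.
Qed.

Lemma sq_le1 (R : realFieldType) (d : R) : d <= 1 -> - d <= 1 -> d ^+ 2 <= 1.
Proof.
move=> h1 h2; rewrite -(real_normK (num_real d)).
apply: exprn_ile1; first exact: normr_ge0.
by rewrite ler_norml h1 andbT lerNl.
Qed.

Lemma deg_sum (R : realFieldType) (T : finType) (e : rel T) z (c : R) :
  \sum_(w | e z w) c = (deg e z)%:R * c.
Proof.
rewrite sumr_const mulr_natl /deg; congr (_ *+ _).
by rewrite cardsE.
Qed.

Lemma step_ineq (R : realFieldType) (T : finType) (e : rel T) (e_sym : symmetric e)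
  (x y : T) (v : {ffun T -> R}) (hv : unit_voltage e x y v) z :
  z != y ->
  \sum_(w | e z w) (v x - v w) ^+ 2 <= (deg e z)%:R * ((v x - v z) ^+ 2 + 1).
Proof.
move=> nzy.
set a := v x - v z.
have -> : \sum_(w | e z w) (v x - v w) ^+ 2 =
   \sum_(w | e z w) (a ^+ 2 + a * (v z - v w) *+ 2 + (v z - v w) ^+ 2).
  apply: eq_bigr => w _; rewrite -sqrrD; congr (_ ^+ 2).
  by rewrite /a addrA subrK.
rewrite big_split /= big_split /= sumrMnl.
have -> : \sum_(w | e z w) a * (v z - v w) = 0.
  rewrite -mulr_sumr (div_eq hv nzy); case: (eqVneq z x) => [zx|nzx].
    by rewrite /a zx subrr mul0r.
  by rewrite mulr0.
rewrite mul0rn addr0 deg_sum mulrDr lerD2l -deg_sum.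
apply: ler_sum => w ezw; apply: sq_le1.
  exact: (edge_bound e_sym hv).
by rewrite opprB; apply: (edge_bound e_sym hv); rewrite e_sym.
Qed.

Lemma hit_bound (R : realFieldType) (T : finType) (e : rel T) (e_sym : symmetric e)
  (x y : T) (v : {ffun T -> R}) (hv : unit_voltage e x y v) n :
  forall z, z != y ->
  v x ^+ 2 * hit_within R e y n z <= (v x - v z) ^+ 2 + n%:R.
Proof.
have vy : v y = 0 by case: hv.
elim: n => [|n IH] z nzy /=.
  by rewrite mulr0 addr0 sqr_ge0.
rewrite /srw_step.
have hge : 0 <= (v x - v z) ^+ 2 + n.+1%:R by rewrite addr_ge0 ?sqr_ge0 ?ler0n.
case: (posnP (deg e z)) => [d0|dpos].
  by rewrite big1 ?mulr0 // => w _; rewrite d0 invr0 mulr0 mul0r.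
set dg := (deg e z)%:R.
have dgpos : 0 < dg by rewrite ltr0n.
rewrite mulr_sumr.
apply: le_trans (_ : \sum_w (e z w)%:R / dg * ((v x - v w) ^+ 2 + n%:R) <= _).
  apply: ler_sum => w _; rewrite mulrCA; apply: ler_wpM2l.
    by rewrite divr_ge0 ?ler0n.
  case: (eqVneq w y) => [->|nwy].
    by rewrite vy subr0 mulr1 lerDl ler0n.
  exact: IH.
have -> : \sum_w (e z w)%:R / dg * ((v x - v w) ^+ 2 + n%:R) =
   dg^-1 * \sum_(w | e z w) ((v x - v w) ^+ 2 + n%:R).
  rewrite mulr_sumr [RHS]big_mkcond /=; apply: eq_bigr => w _.
  by case: (e z w); rewrite ?mul0r ?mulr0 // mul1r.
rewrite ler_pdivrMl // big_split /= deg_sum.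
rewrite -natr1 addrA mulrDr mulrDr [X in _ <= X]addrAC.
rewrite lerD2r -mulrDr.
exact: (step_ineq e_sym hv nzy).
Qed.

Unset Implicit Arguments. Set Strict Implicit.

Theorem lemma2p1 (R : realFieldType) (T : finType) (e : rel T)
  (e_sym : symmetric e) (e_irr : irreflexive e)
  (e_conn : forall u v : T, connect e u v)
  (x y : T) (eps : R) (eps_gt0 : 0 < eps) (n : nat)
  (hn : n%:R <= eps * Reff R e x y ^+ 2) :
  hit_within R e y n x <= eps.
Proof.
move: hn; rewrite /Reff.
case: (eqVneq x y) => [_|nxy].
  rewrite expr0n /= mulr0 => hn.
  have n0 : n = 0%N by move: hn; rewrite lern0 => /eqP.
  by rewrite n0 /= ltW.
set V := epsilon _ _.
have hV : unit_voltage e x y V.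
  apply: epsilon_spec; exact: voltage_exists.
move=> hn.
have H := hit_bound e_sym hV n nxy.
rewrite subrr expr0n /= add0r in H.
case: (eqVneq (V x) 0) => [V0|Vn0].
  move: hn; rewrite V0 expr0n /= mulr0 => hn.
  have n0 : n = 0%N by move: hn; rewrite lern0 => /eqP.
  by rewrite n0 /= ltW.
have Vpos : 0 < V x ^+ 2 by rewrite lt_def sqrf_eq0 Vn0 sqr_ge0.
rewrite -(ler_pM2l Vpos); apply: (le_trans H).
by rewrite mulrC.
Qed.
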